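(* If $m>0$ is an integer, then $G_m(\lambda)$ is a polynomial in $\lambda$ of degree $m$ with zero constant term. Writing $G_m(\lambda)=\sum_{k=1}^m(-1)^{k-1}g(m,k)\lambda^k$ (and setting $g(m,k)=0$ for $k>m$ and $g(m,0)=0$), one has for all $m>1$ and $1\le k\le m$: $$k\cdot g(m,k)=g(m-1,k)+g(m-1,k-1).$$
   Context: For an integer $m$ let $R_m(z)=\sum_{n\ge1} n^{n-m}\frac{z^n}{n!}$, a formal power series in $z$. Let $T(z)=\sum_{n\ge1}n^{n-1}\frac{z^n}{n!}$ (the tree function); it satisfies $T(z)=z e^{T(z)}$, so its compositional inverse is $z=\lambda e^{-\lambda}$. Define the formal power series $G_m(\lambda):=R_m(\lambda e^{-\lambda})$, so that $G_m(T(z))=R_m(z)$. *)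

(* Defs.v *)
From mathcomp Require Import all_boot all_order all_algebra.
Set Implicit Arguments. Unset Strict Implicit. Unset Printing Implicit Defensive.
Import Order.TTheory GRing.Theory Num.Theory.
Local Open Scope ring_scope.

Definition fps := nat -> rat.

Definition fps_mul (f g : fps) : fps :=
  fun N => \sum_(i < N.+1) f i * g (N - i)%N.

Definition fps_one : fps := fun N => if N == 0%N then 1 else 0.

Fixpoint fps_pow (f : fps) (n : nat) : fps :=
  match n with 0%N => fps_one | n'.+1 => fps_mul f (fps_pow f n') end.

(* Composition a(f) for f with zero constant term:
   [z^N] sum_n a_n f^n = sum_{n <= N} a_n [z^N] f^n. *)
Definition fps_comp (a f : fps) : fps :=
  fun N => \sum_(n < N.+1) a n * fps_pow f n N.

Definition fps_X : fps := fun N => if N == 1%N then 1 else 0.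
Definition fps_expneg : fps := fun k => (-1) ^+ k / (k`!)%:R.
Definition lam_exp_neg : fps := fps_mul fps_X fps_expneg.

Definition Rser (m : int) : fps :=
  fun n => if n == 0%N then 0 else ((n%:R : rat) ^ (n%:Z - m)) / (n`!)%:R.

Definition Gser (m : int) : fps := fps_comp (Rser m) lam_exp_neg.

Definition gcoef (m k : nat) : rat :=
  if (k == 0%N) || (m < k)%N then 0 else (-1) ^+ k.-1 * Gser m%:Z k.

(* Main.v *)
Require Import Defs.
From mathcomp Require Import all_boot all_order all_algebra zify ring lra.
Import Order.TTheory GRing.Theory Num.Theory.
Local Open Scope ring_scope.

Lemma lam_coef N : lam_exp_neg N =
  if N is N'.+1 then (-1) ^+ N' / (N'`!)%:R else 0.
Proof.
rewrite /lam_exp_neg /fps_mul; case: N => [|N].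
  by rewrite big_ord_recl big_ord0 /fps_X /= mul0r addr0.
rewrite big_ord_recl big_ord_recl /= /fps_X /= mul0r add0r mul1r.
rewrite big1 ?addr0; last by move=> i _; rewrite /bump /= mul0r.
by rewrite /fps_expneg subn1.
Qed.

Lemma pow_coef n N : fps_pow lam_exp_neg n N =
  if (n <= N)%N then (- n%:R) ^+ (N - n) / ((N - n)`!)%:R else 0.
Proof.
elim: n N => [|n IH] N /=.
  rewrite /fps_one subn0 oppr0 expr0n; case: N => [|N] //=.
  by rewrite mul0r.
rewrite /fps_mul big_ord_recl lam_coef mul0r add0r.
under eq_bigr => i _ do rewrite lift0 lam_coef IH.
case: ifP => hN; last first.
  rewrite big1 // => i _; case: ifP; last by rewrite mulr0.
  move=> h; exfalso; move: hN h => /negbT; move: (ltn_ord i); rewrite -ltnNge; lia.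
have [M eN] : exists M, N = (M.+1 + n)%N by exists (N - n.+1)%N; lia.
rewrite eN big_split_ord /= [X in _ + X]big1 ?addr0; last first.
  move=> i _; case: ifP; last by rewrite mulr0.
  move=> h; exfalso; move: h (ltn_ord i); lia.
have -> : (M.+1 + n - n.+1 = M)%N by lia.
have -> : - (n.+1%:R) = - n%:R + (-1:rat) by rewrite -addn1 natrD opprD.
rewrite exprDn mulr_suml; apply: eq_bigr => i _.
rewrite ifT; last by move: (ltn_ord i); lia.
have -> : (M.+1 + n - i.+1 - n = M - i)%N by lia.
have hi : (i <= M)%N by move: (ltn_ord i); lia.
have := bin_fact hi => /(congr1 (fun k => k%:R : rat)); rewrite !natrM => hb.
rewrite -mulr_natr -hb.
have h1 : (i`!)%:R != 0 :> rat by rewrite pnatr_eq0 -lt0n fact_gt0.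
have h2 : ((M - i)`!)%:R != 0 :> rat by rewrite pnatr_eq0 -lt0n fact_gt0.
have h3 : ('C(M, i))%:R != 0 :> rat by rewrite pnatr_eq0 -lt0n bin_gt0.
field; by rewrite h1 h2 h3.
Qed.

Definition D (m : int) (N : nat) : rat :=
  \sum_(i < N) ('C(N, i.+1))%:R * (-1) ^+ (N - i.+1) * (i.+1%:R) ^ (N%:Z - m).

Lemma fact_neq0 n : (n`!)%:R != 0 :> rat.
Proof. by rewrite pnatr_eq0 -lt0n fact_gt0. Qed.

Lemma Gser_D m N : Gser m N = D m N / (N`!)%:R.
Proof.
rewrite /Gser /fps_comp big_ord_recl {1}/Rser eqxx mul0r add0r /D mulr_suml.
apply: eq_bigr => i _; rewrite lift0 pow_coef ifT ?(ltn_ord i) // /Rser /=.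
have hi : (i.+1 <= N)%N by exact: ltn_ord.
have e : N%:Z - m = (i.+1%:Z - m) + (N - i.+1)%N%:Z by lia.
have hx : i.+1%:R != 0 :> rat by rewrite pnatr_eq0.
rewrite [in RHS]e [in RHS]expfzDr // -exprnP exprNn.
set u := ('C(N, i.+1))%:R; set v := (i.+1)`!%:R; set w := (N - i.+1)`!%:R.
have hb : u * (v * w) = (N`!)%:R by rewrite /u /v /w -!natrM bin_fact.
rewrite -hb.
have h3 : u != 0 by rewrite pnatr_eq0 -lt0n bin_gt0.
have := fact_neq0 i.+1; have := fact_neq0 (N - i.+1).
rewrite -/v -/w => h1 h2.
field; by rewrite h1 h2 h3.
Qed.

Lemma DK m N : D m N.+1 = N.+1%:R * (D (m + 1) N.+1 + D m N).
Proof.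
have E1 : D m N.+1 = N.+1%:R * \sum_(i < N.+1)
    'C(N, i)%:R * (-1) ^+ (N - i) * (i.+1%:R) ^ (N%:Z - m).
  rewrite /D mulr_sumr; apply: eq_bigr => i _.
  have -> : N.+1%:Z - m = 1 + (N%:Z - m) by lia.
  rewrite expfzDr ?pnatr_eq0 // expr1z subSS.
  have := mul_bin_diag N.+1 i => /(congr1 (fun k => k%:R : rat)).
  rewrite natrM natrM /= => h.
  transitivity ((i.+1%:R * ('C(N.+1, i.+1)%:R : rat)) * (-1) ^+ (N - i) * i.+1%:R ^ (N%:Z - m)); first by ring.
  by rewrite -h; ring.
have E2 : D (m + 1) N.+1 = \sum_(i < N.+1)
    'C(N, i)%:R * (-1) ^+ (N - i) * (i.+1%:R) ^ (N%:Z - m) +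
    \sum_(i < N.+1) 'C(N, i.+1)%:R * (-1) ^+ (N - i) * (i.+1%:R) ^ (N%:Z - m).
  rewrite /D -big_split; apply: eq_bigr => i _.
  have -> : N.+1%:Z - (m + 1) = N%:Z - m by lia.
  rewrite binS natrD subSS /=; ring.
have E3 : \sum_(i < N.+1) 'C(N, i.+1)%:R * (-1) ^+ (N - i) * (i.+1%:R) ^ (N%:Z - m)
    + D m N = 0.
  rewrite big_ord_recr /= bin_small // mul0r mul0r addr0 /D -big_split big1 // => i _.
  have -> : (N - i = (N - i.+1).+1)%N by move: (ltn_ord i); lia.
  rewrite exprS /=; ring.
by rewrite E1 E2 -addrA E3 addr0.
Qed.

Lemma DNN N : D N.+1%:Z N.+1 = - (-1) ^+ N.+1.
Proof.
have := exprDn (-1 : rat) 1 N.+1.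
rewrite addNr expr0n /= big_ord_recl subn0 bin0 expr0 mulr1.
under eq_bigr => i _ do rewrite lift0 expr1n mulr1.
move=> h; apply: (addrI ((-1) ^+ N.+1)); rewrite addrN [RHS]h mulr1n.
congr (_ + _); apply: eq_bigr => i _.
by rewrite subrr expr0z mulr1 mulr_natl.
Qed.

Lemma Dvan e N : (0 < e)%N -> (e < N)%N -> D (N%:Z - e%:Z) N = 0.
Proof.
elim: e N => [//|e IH] [//|N] _ hN.
case: e IH hN => [|e] IH hN.
  have -> : N.+1%:Z - 1%N%:Z = N%:Z by lia.
  case: N hN => [//|N] hN.
  rewrite DK.
  have -> : N.+1%:Z + 1 = N.+2%:Z by lia.
  by rewrite DNN DNN exprS mulN1r opprK subrr mulr0.
rewrite DK.
have -> : N.+1%:Z - e.+2%:Z + 1 = N.+1%:Z - e.+1%:Z by lia.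
rewrite IH //; last by lia.
have -> : N.+1%:Z - e.+2%:Z = N%:Z - e.+1%:Z by lia.
rewrite IH ?addr0 ?mulr0 //; lia.
Qed.

Lemma Grec m k : k.+1%:R * Gser (m + 1) k.+1 = Gser m k.+1 - Gser m k.
Proof.
rewrite !Gser_D [D m k.+1]DK factS natrM.
have h1 := fact_neq0 k.
have h2 : k.+1%:R != 0 :> rat by rewrite pnatr_eq0.
set a := D (m + 1) k.+1; set b := D m k.
field; by rewrite h1 addrC natr1 h2.
Qed.

Lemma Gvan m N : (0 < m)%N -> (m < N)%N -> Gser m%:Z N = 0.
Proof.
move=> hm hN; rewrite Gser_D.
have -> : m%:Z = N%:Z - (N - m)%N%:Z by lia.
by rewrite Dvan ?mul0r //; lia.
Qed.

Lemma G0 m : Gser m 0 = 0.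
Proof. by rewrite Gser_D /D big_ord0 mul0r. Qed.

Lemma gcoefS m k : (0 < m)%N -> gcoef m k.+1 = (-1) ^+ k * Gser m%:Z k.+1.
Proof.
move=> hm; rewrite /gcoef /=; case: ifP => h //.
by rewrite Gvan ?mulr0.
Qed.

Theorem corollary2 :
  (forall m : nat, (0 < m)%N ->
     exists p : {poly rat},
       size p = m.+1 /\ p`_0 = 0 /\ (forall N : nat, Gser m%:Z N = p`_N))
  /\
  (forall m k : nat, (1 < m)%N -> (1 <= k <= m)%N ->
     k%:R * gcoef m k = gcoef m.-1 k + gcoef m.-1 k.-1).
Proof.
split.
  move=> m hm; exists (\poly_(i < m.+1) Gser m%:Z i); split; [|split].
  - apply: size_poly_eq => /=.
    case: m hm => [//|m] _.
    rewrite Gser_D DNN mulf_neq0 ?oppr_eq0 ?expf_neq0 ?oppr_eq0 ?oner_eq0 //.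
    by rewrite invr_eq0 fact_neq0.
  - by rewrite coef_poly /= G0.
  - move=> N; rewrite coef_poly; case: ifP => // h.
    by rewrite Gvan //; move/negbT: h; rewrite -leqNgt.
move=> [//|[//|m']] [//|k] _ hk /=.
rewrite !gcoefS //.
have -> : m'.+2%:Z = m'.+1%:Z + 1 by lia.
rewrite mulrCA Grec.
case: k hk => [|k] hk; first by rewrite G0 /gcoef /= addr0 subr0.
rewrite gcoefS // exprS mulN1r.
by rewrite mulrBr mulNr mulNr opprK.
Qed.
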